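(* Let $\rho$ be a qubit state and write $p_{00}=\langle 0|\rho|0\rangle$, $p_{01}=\langle 0|\rho|1\rangle$ in the eigenbasis $\{|0\rangle,|1\rangle\}$ of $L=|1\rangle\langle 1|$. Let $L_{AB}=L\otimes\mathbb{I}+\mathbb{I}\otimes L$ on two qubits $A,B$. Define $$\Delta M_A^{(1)}:=\max_{V_{AB}} M^{(1)}(\sigma_A)-M^{(1)}(\rho),\qquad \sigma_A=\mathrm{tr}_B\big[V_{AB}(\rho\otimes\rho)V_{AB}^\dagger\big],$$ where the maximum is over all unitaries $V_{AB}$ with $[V_{AB},L_{AB}]=0$. Then $$\Delta M_A^{(1)}=|p_{01}|\Big(\sqrt{1+(2p_{00}-1)^2}-1\Big),$$ and this maximum is achieved by the unitary that acts as the identity on $|00\rangle$ and $|11\rangle$ and, on the degenerate subspace spanned by $\{|01\rangle,|10\rangle\}$, acts as the rotation $|01\rangle\mapsto\cos\theta|01\rangle+\sin\theta|10\rangle$, $|10\rangle\mapsto-\sin\theta|01\rangle+\cos\theta|10\rangle$ with $\cos\theta=1/\sqrt{1+(2p_{00}-1)^2}$ and $\sin\theta=(2p_{00}-1)/\sqrt{1+(2p_{00}-1)^2}$ (i.e. $\theta=\cos^{-1}\big(1/\sqrt{1+(2p_{00}-1)^2}\big)$ up to this sign convention).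
   Context: For a qubit with $L=|1\rangle\langle1|$, the first mode of an operator $\rho$ is $\rho^{(1)}=|1\rangle\langle1|\rho|0\rangle\langle0|$, and the coherence measure is $M^{(1)}(\rho):=\|\rho^{(1)}\|_1$ (trace norm), so that $M^{(1)}(\rho)=|p_{01}|$. Unitaries commuting with $L_{AB}$ are called allowed unitaries. *)

(* Defs.v *)
From HB Require Import structures.
From mathcomp Require Import all_boot all_order all_algebra.
From mathcomp Require Import complex.
Set Implicit Arguments. Unset Strict Implicit. Unset Printing Implicit Defensive.
Import Order.TTheory GRing.Theory Num.Theory.
Local Open Scope ring_scope.

(* Two-qubit operators are 4x4 matrices, the
   basis vector |a b> (a = qubit A, b = qubit B) having index 2*a+b. *)

Section Defs.
Variable R : rcfType.
Local Notation C := R[i].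

Definition qA (i : 'I_4) : 'I_2 := inord (i %/ 2).
Definition qB (i : 'I_4) : 'I_2 := inord (i %% 2).
Definition ket2 (a b : 'I_2) : 'I_4 := inord (2 * a + b).

Definition kron (A B : 'M[C]_2) : 'M[C]_4 :=
  \matrix_(i, j) (A (qA i) (qA j) * B (qB i) (qB j)).

Definition ptraceB (X : 'M[C]_4) : 'M[C]_2 :=
  \matrix_(a, a') \sum_(b < 2) X (ket2 a b) (ket2 a' b).

Definition adj n m (X : 'M[C]_(n, m)) : 'M[C]_(m, n) := (map_mx Num.conj X)^T.

Definition is_state (rho : 'M[C]_2) : Prop :=
  adj rho = rho /\ \tr rho = 1 /\
  forall v : 'cV[C]_2, 0 <= (adj v *m rho *m v) 0 0.

Definition unitary n (V : 'M[C]_n) : Prop := V *m adj V = 1%:M /\ adj V *m V = 1%:M.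

Definition Lq : 'M[C]_2 := delta_mx 1 1.
Definition LAB : 'M[C]_4 := kron Lq 1%:M + kron 1%:M Lq.

Definition allowed (V : 'M[C]_4) : Prop := unitary V /\ V *m LAB = LAB *m V.

(* M^(1)(X) = || |1><1| X |0><0| ||_1 ; the operator |1><1| X |0><0| has the
   single (possibly) nonzero entry X 1 0, so its trace norm is |X 1 0|. *)
Definition M1 (X : 'M[C]_2) : C := `| X 1 0 |.

Definition sigmaA (V : 'M[C]_4) (rho : 'M[C]_2) : 'M[C]_2 :=
  ptraceB (V *m kron rho rho *m adj V).

(* identity on |00>,|11>; rotation on span{|01>,|10>}:
   |01> -> c|01> + s|10>,  |10> -> -s|01> + c|10>  (columns = images) *)
Definition Vrot (c s : C) : 'M[C]_4 :=
  \matrix_(i, j)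
    if (i == ket2 0 0) && (j == ket2 0 0) then 1
    else if (i == ket2 1 1) && (j == ket2 1 1) then 1
    else if (i == ket2 0 1) && (j == ket2 0 1) then c
    else if (i == ket2 1 0) && (j == ket2 0 1) then s
    else if (i == ket2 0 1) && (j == ket2 1 0) then - s
    else if (i == ket2 1 0) && (j == ket2 1 0) then c
    else 0.
End Defs.

(* Main.v *)
Require Import Defs.
From HB Require Import structures.
From mathcomp Require Import all_boot all_order all_algebra.
From mathcomp Require Import complex.
From mathcomp Require Import ring.
Import Order.TTheory GRing.Theory Num.Theory.
Local Open Scope ring_scope.
Section S.
Variable R : rcfType.
Local Notation C := R[i].
Implicit Types (V : 'M[C]_4).
Lemma sum2 (F : 'I_2 -> C) : \sum_(i<2) F i = F 0 + F 1.
Proof. rewrite !big_ord_recl big_ord0 addr0; congr (_ + F _); exact: val_inj. Qed.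
Lemma sum4 (F : 'I_4 -> C) : \sum_(i<4) F i = F 0 + F 1 + F 2 + F 3.
Proof. rewrite !big_ord_recl big_ord0 addr0 !addrA; congr (_ + F _ + F _ + F _); exact: val_inj. Qed.
Lemma ord4 (i : 'I_4) : i = 0 \/ i = 1 \/ i = 2 \/ i = 3.
Proof.
case: i => [[|[|[|[|k]]]] Hk] //.
- by left; apply: val_inj.
- by right; left; apply: val_inj.
- by right; right; left; apply: val_inj.
- by right; right; right; apply: val_inj.
Qed.
Lemma ord2 (i : 'I_2) : i = 0 \/ i = 1.
Proof.
case: i => [[|[|k]] Hk] //.
- by left; apply: val_inj.
- by right; apply: val_inj.
Qed.
Lemma qA0 : qA 0 = 0. Proof. by apply: val_inj; rewrite /= inordK. Qed.
Lemma qA1 : qA 1 = 0. Proof. by apply: val_inj; rewrite /= inordK. Qed.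
Lemma qA2 : qA 2 = 1. Proof. by apply: val_inj; rewrite /= inordK. Qed.
Lemma qA3 : qA 3 = 1. Proof. by apply: val_inj; rewrite /= inordK. Qed.
Lemma qB0 : qB 0 = 0. Proof. by apply: val_inj; rewrite /= inordK. Qed.
Lemma qB1 : qB 1 = 1. Proof. by apply: val_inj; rewrite /= inordK. Qed.
Lemma qB2 : qB 2 = 0. Proof. by apply: val_inj; rewrite /= inordK. Qed.
Lemma qB3 : qB 3 = 1. Proof. by apply: val_inj; rewrite /= inordK. Qed.
Lemma k00 : ket2 0 0 = 0. Proof. by apply: val_inj; rewrite /= inordK. Qed.
Lemma k01 : ket2 0 1 = 1. Proof. by apply: val_inj; rewrite /= inordK. Qed.
Lemma k10 : ket2 1 0 = 2. Proof. by apply: val_inj; rewrite /= inordK. Qed.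
Lemma k11 : ket2 1 1 = 3. Proof. by apply: val_inj; rewrite /= inordK. Qed.
Definition qE := (qA0, qA1, qA2, qA3, qB0, qB1, qB2, qB3, k00, k01, k10, k11).

Definition w (i : 'I_4) : C := if i == 0 then 0 else if i == 3 then 2 else 1.

Lemma LABE : LAB R = diag_mx (\row_i w i).
Proof.
apply/matrixP => i j; rewrite /LAB /kron /Lq !mxE.
case: (ord4 i) => [->|[->|[->|->]]]; case: (ord4 j) => [->|[->|[->|->]]];
rewrite ?qE /w /=.
all: try (simpl; rewrite ?mulr1n ?mulr0n ?mulr1 ?mulr0 ?mul1r ?mul0r ?addr0 ?add0r //).
Qed.

Lemma w0 : w 0 = 0. Proof. by []. Qed.
Lemma w1 : w 1 = 1. Proof. by []. Qed.
Lemma w2 : w 2 = 1. Proof. by []. Qed.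
Lemma w3 : w 3 = 2. Proof. by []. Qed.

Lemma comm_zero (V : 'M[C]_4) : V *m LAB R = LAB R *m V ->
  forall i j, w i != w j -> V i j = 0.
Proof.
move=> h i j hij; move/matrixP: h => /(_ i j).
rewrite LABE mul_mx_diag mul_diag_mx !mxE /= => e.
have : (w j - w i) * V i j = 0.
  by rewrite mulrBl mulrC; apply/eqP; rewrite subr_eq0; apply/eqP; exact: e.
by move/eqP; rewrite mulf_eq0 subr_eq0 eq_sym (negbTE hij) /= => /eqP.
Qed.

Lemma n01 : (0:C) != 1. Proof. by rewrite eq_sym oner_neq0. Qed.
Lemma n02 : (0:C) != 2. Proof. by rewrite eq_sym pnatr_eq0. Qed.
Lemma n12 : (1:C) != 2. Proof. by rewrite (eqr_nat C 1 2). Qed.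

Lemma zeros (V : 'M[C]_4) : V *m LAB R = LAB R *m V ->
  [/\ V 0 1 = 0, V 0 2 = 0, V 0 3 = 0, V 1 0 = 0 & V 1 3 = 0] /\
  [/\ V 2 0 = 0, V 2 3 = 0, V 3 0 = 0, V 3 1 = 0 & V 3 2 = 0].
Proof.
move=> h; have z := comm_zero V h.
split; split; apply: z; rewrite ?w0 ?w1 ?w2 ?w3 ?n01 ?n02 ?n12 //;
  by rewrite eq_sym ?n01 ?n02 ?n12.
Qed.

Lemma sigma10 (V : 'M[C]_4) (rho : 'M[C]_2) : V *m LAB R = LAB R *m V ->
  sigmaA V rho 1 0 = rho 1 0 * (rho 0 0 * (V 2 1 + V 2 2) * (V 0 0)^*
     + rho 1 1 * V 3 3 * ((V 1 1)^* + (V 1 2)^*)).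
Proof.
move=> /(zeros V) [[z01 z02 z03 z10 z13] [z20 z23 z30 z31 z32]].
rewrite /sigmaA /ptraceB /adj /kron !(mxE, sum2, sum4) ?qE.
rewrite z01 z02 z03 z10 z13 z20 z23 z30 z31 z32 ?rmorph0.
ring.
Qed.

Lemma state_facts (rho : 'M[C]_2) : is_state rho ->
  [/\ rho 1 0 = (rho 0 1)^*, (rho 0 0)^* = rho 0 0, rho 0 0 + rho 1 1 = 1,
     0 <= rho 0 0 & 0 <= rho 1 1].
Proof.
case=> ha [ht hp].
have e10 := ha; move/matrixP: e10 => /(_ 1 0); rewrite !mxE => e10.
have e00 := ha; move/matrixP: e00 => /(_ 0 0); rewrite !mxE => e00.
split => //.
- by move: ht; rewrite /mxtrace sum2.
- move: (hp (\col_i ((i == 0)%:R))); rewrite /adj !(mxE, sum2) /=.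
  by rewrite ?rmorph0 ?rmorph1 ?mulr1n ?mulr0n ?rmorph0 ?rmorph1 ?mulr0 ?mul0r ?mulr1 ?mul1r ?addr0 ?add0r.
- move: (hp (\col_i ((i == 1)%:R))); rewrite /adj !(mxE, sum2) /=.
  by rewrite ?rmorph0 ?rmorph1 ?mulr1n ?mulr0n ?rmorph0 ?rmorph1 ?mulr0 ?mul0r ?mulr1 ?mul1r ?addr0 ?add0r.
Qed.

Lemma unit_facts (V : 'M[C]_4) : allowed V ->
  [/\ V 0 0 * (V 0 0)^* = 1, V 3 3 * (V 3 3)^* = 1,
      (V 1 1)^* * V 1 1 + (V 2 1)^* * V 2 1 = 1,
      (V 1 2)^* * V 1 2 + (V 2 2)^* * V 2 2 = 1 &
      (V 1 1)^* * V 1 2 + (V 2 1)^* * V 2 2 = 0].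
Proof.
case=> [[h1 h2] hc].
have [[z01 z02 z03 z10 z13] [z20 z23 z30 z31 z32]] := zeros V hc.
have E1 := h1; move/matrixP: E1 => E1.
have E2 := h2; move/matrixP: E2 => E2.
move: (E1 0 0) (E1 3 3) (E2 1 1) (E2 2 2) (E2 1 2).
rewrite /adj !(mxE, sum4) /= ?z01 ?z02 ?z03 ?z10 ?z13 ?z20 ?z23 ?z30 ?z31 ?z32 ?rmorph0
  ?mulr0 ?mul0r ?addr0 ?add0r.
by move=> ? ? ? ? ?; split.
Qed.

Lemma Vrot_allowed (cc ss : C) : cc^* = cc -> ss^* = ss -> cc * cc + ss * ss = 1 ->
  allowed (Vrot cc ss).
Proof.
move=> hc hs h1.
have hns : (- ss)^* = - ss by apply/CrealP; rewrite rpredN; apply/CrealP.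
split; first split.
- apply/matrixP => i j; rewrite /adj !(mxE, sum4) ?qE.
  case: (ord4 i) => [->|[->|[->|->]]]; case: (ord4 j) => [->|[->|[->|->]]] /=;
  rewrite ?hns ?rmorph0 ?rmorph1 ?hc ?hs ?mulr1n ?mulr0n ?mulr0 ?mul0r ?mulr1 ?mul1r ?addr0 ?add0r //.
  all: try by ring.
  all: try by rewrite -h1; ring.
- apply/matrixP => i j; rewrite /adj !(mxE, sum4) ?qE.
  case: (ord4 i) => [->|[->|[->|->]]]; case: (ord4 j) => [->|[->|[->|->]]] /=;
  rewrite ?hns ?rmorph0 ?rmorph1 ?hc ?hs ?mulr1n ?mulr0n ?mulr0 ?mul0r ?mulr1 ?mul1r ?addr0 ?add0r //.
  all: try by ring.
  all: try by rewrite -h1; ring.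
- rewrite LABE mul_mx_diag mul_diag_mx; apply/matrixP => i j; rewrite !mxE ?qE.
  case: (ord4 i) => [->|[->|[->|->]]]; case: (ord4 j) => [->|[->|[->|->]]] /=;
  rewrite /w /= ?mulr0 ?mul0r ?mulr1 ?mul1r //.
  all: try by ring.
Qed.

Lemma cM (x y : C) : (x * y)^* = x^* * y^*. Proof. exact: rmorphM. Qed.
Lemma cD (x y : C) : (x + y)^* = x^* + y^*. Proof. exact: rmorphD. Qed.
Lemma c0 : (0 : C)^* = 0. Proof. exact: rmorph0. Qed.
Lemma c1 : (1 : C)^* = 1. Proof. exact: rmorph1. Qed.
Lemma norm1 (a : C) : a * a^* = 1 -> `|a| = 1.
Proof. by move=> h; apply/eqP; rewrite -sqrp_eq1 // normCK h. Qed.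

Lemma VrotE (c s : C) :
  [/\ Vrot c s 0 0 = 1, Vrot c s 3 3 = 1, Vrot c s 1 1 = c, Vrot c s 1 2 = - s
    & Vrot c s 2 1 = s /\ Vrot c s 2 2 = c].
Proof. by rewrite /Vrot !mxE ?qE. Qed.
End S.
Arguments c0 {R}.
Arguments c1 {R}.
Arguments state_facts {R rho}.
Arguments unit_facts {R V}.
Arguments norm1 {R a}.
Arguments Vrot_allowed {R cc ss}.
Arguments VrotE {R}.
Arguments sigma10 {R V rho}.

Theorem mainTheorem2 (R : rcfType) (rho : 'M[R[i]]_2) :
  is_state rho ->
  let p00 := rho 0 0 in
  let p01 := rho 0 1 in
  let r := sqrtC (1 + (2 * p00 - 1) ^+ 2) in
  let DM := `|p01| * (r - 1) in
  (forall V : 'M[R[i]]_4, allowed V -> M1 (sigmaA V rho) - M1 rho <= DM) /\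
  allowed (Vrot (1 / r) ((2 * p00 - 1) / r)) /\
  M1 (sigmaA (Vrot (1 / r) ((2 * p00 - 1) / r)) rho) - M1 rho = DM.
Proof.
move=> hst p00 p01 r DM.
have [h10 hP hPQ hP0 hQ0] := state_facts hst.
have hQ : rho 1 1 = 1 - p00 by rewrite /p00 -hPQ; ring.
have hPr : p00 \is Num.real := ger0_real hP0.
have ht : (2 * p00 - 1) \is Num.real by rewrite rpredB ?rpredM ?rpred1 ?rpred_nat.
have hr0' : 0 <= 1 + (2 * p00 - 1) ^+ 2 by rewrite addr_ge0 ?ler01 // -realEsqr.
have hr : 0 <= r by rewrite sqrtC_ge0.
have hr2 : r ^+ 2 = 1 + (2 * p00 - 1) ^+ 2 by rewrite sqrtCK.
have hrn0 : r != 0.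
  apply/eqP => r0; move: hr2; rewrite r0 expr0n /= => /eqP.
  by rewrite eq_sym paddr_eq0 ?ler01 -?realEsqr // oner_eq0.
have hM1 : M1 rho = `|p01| by rewrite /M1 h10 norm_conjC.
split.
  move=> V hV.
  have [hu1 hu2 hu3 hu4 hu5] := unit_facts hV.
  case: hV => _ hc.
  rewrite hM1 /M1 sigma10 // h10.
  have hxy : `|V 2 1 + V 2 2| ^+ 2 + `|(V 1 1)^* + (V 1 2)^*| ^+ 2 = 2.
    have h4 : V 1 1 * (V 1 2)^* + V 2 1 * (V 2 2)^* = 0.
      by have := congr1 Num.conj hu5; rewrite cD !cM !conjCK c0.
    rewrite !normCK !cD !conjCK.
    transitivity (((V 1 1)^* * V 1 1 + (V 2 1)^* * V 2 1) + ((V 1 2)^* * V 1 2 + (V 2 2)^* * V 2 2)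
       + ((V 1 1)^* * V 1 2 + (V 2 1)^* * V 2 2) + (V 1 1 * (V 1 2)^* + V 2 1 * (V 2 2)^*)).
      by ring.
    by rewrite hu3 hu4 hu5 h4 !addr0.
  set x := `|V 2 1 + V 2 2| in hxy *.
  set y := `|(V 1 1)^* + (V 1 2)^*| in hxy *.
  have hx0 : 0 <= x by apply: normr_ge0.
  have hy0 : 0 <= y by apply: normr_ge0.
  have key : p00 * x + rho 1 1 * y <= r.
    rewrite -(ler_pXn2r (_ : (0 < 2)%N)) ?nnegrE ?addr_ge0 ?mulr_ge0 //.
    rewrite -subr_ge0.
    have -> : r ^+ 2 - (p00 * x + rho 1 1 * y) ^+ 2 = (p00 * y - rho 1 1 * x) ^+ 2.
      have -> : r ^+ 2 = (x ^+ 2 + y ^+ 2) * (p00 ^+ 2 + rho 1 1 ^+ 2).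
        by rewrite hr2 hxy hQ; ring.
      by ring.
    by rewrite -realEsqr rpredB ?rpredM ?ger0_real.
  rewrite /DM mulrBr mulr1; apply: lerB => //.
  rewrite normrM norm_conjC ler_wpM2l //.
  apply: le_trans (ler_normD _ _) _.
  rewrite !normrM norm_conjC (norm1 hu1) (norm1 hu2) (ger0_norm hP0) (ger0_norm hQ0) !mulr1.
  exact: key.
have hrr : r \is Num.real := ger0_real hr.
have hc : (1 / r)^* = 1 / r by apply/CrealP; rewrite rpredM ?rpred1 // rpredV.
have hs : ((2 * p00 - 1) / r)^* = (2 * p00 - 1) / r.
  by apply/CrealP; rewrite rpredM // rpredV.
have hA : allowed (Vrot (1 / r) ((2 * p00 - 1) / r)).
  apply: Vrot_allowed => //.
  transitivity ((1 + (2 * p00 - 1) ^+ 2) / r ^+ 2); first by field.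
  by rewrite -hr2 divff // expf_neq0.
split => //.
case: (hA) => _ hcV.
rewrite hM1 /M1 sigma10 //.
have [-> -> -> -> [-> ->]] := VrotE (1 / r) ((2 * p00 - 1) / r).
have hns : (- ((2 * p00 - 1) / r))^* = - ((2 * p00 - 1) / r).
  by apply/CrealP; rewrite rpredN rpredM // rpredV.
rewrite c1 hc hns.
have -> : rho 0 0 * ((2 * p00 - 1) / r + 1 / r) * 1 + rho 1 1 * 1 * (1 / r - (2 * p00 - 1) / r) = r.
  transitivity (r ^+ 2 / r); last by field.
  by rewrite hr2 hQ /p00; field.
rewrite normrM h10 norm_conjC ger0_norm // /DM.
by ring.
Qed.
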